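(* Fix a constant $0<\alpha<1$. There exist constants $c>0$ and $n_0$ (depending only on $\alpha$) such that for all $n\ge n_0$, all $D$ with $1\le D\le \alpha n$, and all $k$ with $0<k\le D$: if a deterministic algorithm together with advice assignments accomplishes (even anonymous) topology recognition within time $D-k$ on every graph of size $n$ and diameter $D$, then the size of advice is at least $c\,(n^2\log n)/(D-k+1)$. That is, the size of advice needed is in $\Omega((n^2\log n)/(D-k+1))$.
   Context: Graphs are finite, simple, undirected, connected, with no node labels; at each node of degree $d$ the incident edges carry distinct port numbers $0,\dots,d-1$ (no coherence between endpoints). Isomorphism is a bijection of nodes preserving edges and port numbers at both endpoints. Size = number of nodes; $\log$ is base 2. Communication model (LOCAL): synchronous rounds, all nodes start simultaneously; in each round every node may send arbitrary messages to all neighbours, receives their messages (knowing the arrival port), and performs arbitrary local computation. Initially a node knows only its degree and its advice. Advice: an oracle knowing the graph assigns each node a binary string; the size of advice is the maximum string length. All nodes run the same deterministic algorithm. Anonymous topology recognition: every node outputs a port-labeled graph isomorphic to $G$. Time is the number of rounds until all nodes have output. *)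

(* Defs.v *)
From Stdlib Require Import Reals.
From mathcomp Require Import all_boot.
Set Implicit Arguments. Unset Strict Implicit. Unset Printing Implicit Defensive.

(** Port-labeled graph on nodes 'I_n: node v has degree [deg v], and the edge
    at port p (for p < deg v) leads to [nbr v p]. Values of [nbr v p] for
    p >= deg v are irrelevant (never used). *)
Record pgraph (n : nat) : Type := PGraph {
  deg : 'I_n -> nat;
  nbr : 'I_n -> nat -> 'I_n
}.

Definition adj n (G : pgraph n) (u v : 'I_n) : Prop :=
  exists2 p, p < deg G u & nbr G u p = v.

Fixpoint reach n (G : pgraph n) (k : nat) (u v : 'I_n) : Prop :=
  match k with
  | 0 => u = v
  | k'.+1 => reach G k' u v \/ exists w, reach G k' u w /\ adj G w v
  end.

Definition connected n (G : pgraph n) : Prop :=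
  forall u v : 'I_n, exists k, reach G k u v.

Definition wf_pgraph n (G : pgraph n) : Prop :=
  [/\ (forall v p, p < deg G v -> nbr G v p <> v),
      (forall v p q, p < deg G v -> q < deg G v -> nbr G v p = nbr G v q -> p = q),
      (forall v p, p < deg G v ->
         exists2 q, q < deg G (nbr G v p) & nbr G (nbr G v p) q = v)
    & connected G].

(** G has diameter D: every pair of nodes is at distance <= D and some pair
    is at distance > D-1 (i.e. exactly D); meant for D >= 1. *)
Definition has_diameter n (G : pgraph n) (D : nat) : Prop :=
  (forall u v, reach G D u v) /\ exists u v, ~ reach G D.-1 u v.

Definition pg_iso n m (G : pgraph n) (H : pgraph m) : Prop :=
  exists f : 'I_n -> 'I_m, bijective f /\
    forall v, deg H (f v) = deg G v /\
      forall p, p < deg G v -> nbr H (f v) p = f (nbr G v p).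

Definition rport n (G : pgraph n) (v : 'I_n) (p : nat) : nat :=
  let u := nbr G v p in find (fun q => nbr G u q == v) (iota 0 (deg G u)).

(** A node starts knowing only its degree and its advice; in each round it
    sends a message on every port, receives the list of messages indexed by
    arrival port (length = its degree), and updates its state. [out] gives
    the node's output (None = not yet output). *)
Record algo (S M : Type) : Type := Algo {
  a_init : nat -> seq bool -> S;
  a_msg : S -> nat -> M;
  a_trans : S -> seq M -> S;
  a_out : S -> option {m : nat & pgraph m}
}.

Fixpoint run S M (A : algo S M) n (G : pgraph n) (adv : 'I_n -> seq bool)
    (t : nat) : 'I_n -> S :=
  match t with
  | 0 => fun v => a_init A (deg G v) (adv v)
  | t'.+1 => fun v =>
      let st := run A G adv t' in
      a_trans A (st v)
        [seq a_msg A (st (nbr G v p)) (rport G v p) | p <- iota 0 (deg G v)]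
  end.

Definition recognizes S M (A : algo S M) n (G : pgraph n)
    (adv : 'I_n -> seq bool) (T : nat) : Prop :=
  forall v : 'I_n, exists t, t <= T /\
    (forall t', t' < t -> a_out A (run A G adv t' v) = None) /\
    exists H, a_out A (run A G adv t v) = Some H /\ pg_iso G (projT2 H).

Definition advice_size n (adv : 'I_n -> seq bool) : nat :=
  \max_(v < n) size (adv v).

Definition log2R (x : R) : R := Rdiv (ln x) (ln (INR 2)).

(* Main.v *)
Require Import Defs.
From Stdlib Require Import Reals Lra ClassicalEpsilon.
From mathcomp Require Import all_boot all_fingroup zify.
Set Implicit Arguments. Unset Strict Implicit. Unset Printing Implicit Defensive.


Definition permn q (s : {perm 'I_q}) (p : nat) : nat :=
  match (insub p : option 'I_q) with Some o => val (s o) | None => 0 end.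
Definition sigv q (sg : {ffun 'I_q -> {perm 'I_q}}) (r p : nat) : nat :=
  match (insub r : option 'I_q) with Some o => permn (sg o) p | None => 0 end.

Lemma permnE q (s : {perm 'I_q}) (o : 'I_q) : permn s o = s o.
Proof. by rewrite /permn valK. Qed.

Lemma sigvE q sg (r o : 'I_q) : sigv sg r o = sg r o.
Proof. by rewrite /sigv valK permnE. Qed.

Lemma sigv_lt q sg r p : r < q -> p < q -> @sigv q sg r p < q.
Proof. by move=> Hr Hp; rewrite -[r]/(nat_of_ord (Ordinal Hr)) -[p]/(nat_of_ord (Ordinal Hp)) sigvE. Qed.

Lemma sigv_inj q sg r p1 p2 : r < q -> p1 < q -> p2 < q ->
  @sigv q sg r p1 = sigv sg r p2 -> p1 = p2.
Proof.
move=> Hr H1 H2; rewrite -[r]/(nat_of_ord (Ordinal Hr)) -[p1]/(nat_of_ord (Ordinal H1))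
  -[p2]/(nat_of_ord (Ordinal H2)) !sigvE => /val_inj/perm_inj.
by case.
Qed.

Lemma sigv_surj q sg r x : r < q -> x < q ->
  exists2 p, p < q & @sigv q sg r p = x.
Proof.
move=> Hr Hx; exists (nat_of_ord ((sg (Ordinal Hr))^-1%g (Ordinal Hx))) => //.
by rewrite -[r]/(nat_of_ord (Ordinal Hr)) sigvE permKV.
Qed.


Definition gdeg (L q u : nat) : nat :=
  if u < L then (if u == 0 then 1 else 2) else if u == L then (if 0 < L then q.+1 else q) else q.

Definition nb L q (sg : {ffun 'I_q -> {perm 'I_q}}) (u p : nat) : nat :=
  if u < L then (if p == 0 then u.+1 else u.-1)
  else if u == L then (if p < q then L + p.+1 else L.-1)
  else L + bump (u - L) (sigv sg (u - L).-1 p).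
Arguments nb : clear implicits.

Definition G L q sg : pgraph (L+q).+1 :=
  PGraph (fun u : 'I_(L+q).+1 => gdeg L q u)
         (fun u p => inord (nb L q sg u p)).
Arguments G : clear implicits.

Lemma bump_le h i : bump h i <= i.+1.
Proof. rewrite /bump; case: (h <= i); lia. Qed.

Lemma nb_lt L q sg u p : 0 < q -> u < (L+q).+1 -> p < gdeg L q u ->
  nb L q sg u p < (L+q).+1.
Proof.
move=> q0 Hu; rewrite /gdeg /nb.
case: (ltnP u L) => H1.
  by case: (u =P 0) => _; case: (p =P 0) => _; lia.
case: (u =P L) => H2.
  by case: (ltnP p q) => Hpq; case: (posnP L) => HL; lia.
move=> Hp.
have Hs : (u - L).-1 < q by lia.
have := sigv_lt sg Hs Hp; have := bump_le (u - L) (sigv sg (u - L).-1 p); lia.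
Qed.

Lemma GdegE L q sg (u : 'I_(L+q).+1) : deg (G L q sg) u = gdeg L q u.
Proof. by []. Qed.

Lemma GnbrE L q sg (u : 'I_(L+q).+1) p : 0 < q -> p < gdeg L q u ->
  nbr (G L q sg) u p = nb L q sg u p :> nat.
Proof. by move=> q0 Hp; rewrite /= inordK // nb_lt. Qed.

Lemma adjE L q sg (u w : 'I_(L+q).+1) : 0 < q ->
  adj (G L q sg) u w <-> exists2 p, p < gdeg L q u & nb L q sg u p = w.
Proof.
move=> q0; split.
  by case=> p Hp <-; exists p => //; apply/esym/GnbrE.
by case=> p Hp Hw; exists p => //; apply: val_inj; rewrite /= inordK // nb_lt.
Qed.


Lemma bumpE h i : bump h i = if h <= i then i.+1 else i.
Proof. by rewrite /bump; case: leqP. Qed.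

Lemma clique_adj L q sg u w : 0 < q -> L <= u -> L <= w -> u <> w ->
  u < (L+q).+1 -> w < (L+q).+1 ->
  exists2 p, p < gdeg L q u & nb L q sg u p = w.
Proof.
move=> q0 Lu Lw uw Hu Hw; rewrite /gdeg /nb.
case: (ltnP u L) => H1; first lia.
case: (u =P L) => H2.
  exists (w - L).-1; first by case: (posnP L) => HL; lia.
  case: ltnP => H3; lia.
set s := u - L; set t := w - L.
have Hr : s.-1 < q by lia.
have Hx : unbump s t < q by rewrite /unbump; case: ltnP => H; lia.
have [p Hp Hpe] := sigv_surj sg Hr Hx.
exists p => //; rewrite Hpe unbumpKcond.
case: (t =P s) => Hts /=; lia.
Qed.

Lemma nb_path L q sg u p : u < L -> nb L q sg u p = if p == 0 then u.+1 else u.-1.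
Proof. by move=> H; rewrite /nb H. Qed.
Lemma nb_a L q sg p : nb L q sg L p = if p < q then L + p.+1 else L.-1.
Proof. by rewrite /nb ltnn eqxx. Qed.
Lemma nb_free L q sg u p : L < u -> nb L q sg u p = L + bump (u - L) (sigv sg (u - L).-1 p).
Proof. by move=> H; rewrite /nb ltnNge ltnW //= gtn_eqF. Qed.
Lemma gdeg_path L q u : u < L -> gdeg L q u = if u == 0 then 1 else 2.
Proof. by move=> H; rewrite /gdeg H. Qed.
Lemma gdeg_a L q : gdeg L q L = if 0 < L then q.+1 else q.
Proof. by rewrite /gdeg ltnn eqxx. Qed.
Lemma gdeg_free L q u : L < u -> gdeg L q u = q.
Proof. by move=> H; rewrite /gdeg ltnNge ltnW //= gtn_eqF. Qed.

Lemma nb_sym L q sg u p : 0 < q -> u < (L+q).+1 -> p < gdeg L q u ->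
  exists2 p', p' < gdeg L q (nb L q sg u p) & nb L q sg (nb L q sg u p) p' = u.
Proof.
move=> q0 Hu Hp.
have Hw := nb_lt sg q0 Hu Hp.
case: (ltngtP u L) => H1.
- rewrite nb_path // in Hw *; rewrite gdeg_path // in Hp.
  case: (p =P 0) => Hp0 in Hw *.
    case: (ltngtP u.+1 L) => H2.
    + by exists 1; rewrite ?gdeg_path ?nb_path //.
    + lia.
    + rewrite H2; exists q; rewrite ?gdeg_a ?nb_a; first by case: posnP => HL; lia.
      by rewrite ltnn; lia.
  have Hu0 : u <> 0 by move: Hp; case: eqP => ? ?; lia.
  exists 0; first by rewrite gdeg_path //; [case: eqP | lia].
  by rewrite nb_path /=; lia.
- have Hne : L + bump (u - L) (sigv sg (u - L).-1 p) <> u.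
    have := neq_bump (u - L) (sigv sg (u - L).-1 p); move/eqP; lia.
  rewrite nb_free // in Hw *.
  have [p' Hp' E] := @clique_adj L q sg (L + bump (u - L) (sigv sg (u - L).-1 p)) u q0 (leq_addr _ _) ltac:(lia) Hne Hw Hu.
  by exists p'.
- subst u; rewrite gdeg_a in Hp; rewrite nb_a in Hw *.
  case: (ltnP p q) => H3 in Hw *.
    have [p' Hp' E] := @clique_adj L q sg (L + p.+1) L q0 ltac:(lia) ltac:(lia) ltac:(lia) Hw Hu.
    by exists p'.
  have HL : 0 < L by move: Hp; case: posnP => HL; lia.
  exists 0; first by rewrite gdeg_path; [case: eqP | lia].
  by rewrite nb_path /=; lia.
Qed.

Lemma nb_noloop L q sg u p : 0 < q -> u < (L+q).+1 -> p < gdeg L q u ->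
  nb L q sg u p <> u.
Proof.
move=> q0 Hu; rewrite /gdeg /nb.
case: (ltnP u L) => H1.
  by case: (u =P 0) => Hu0; case: (p =P 0) => Hp0; lia.
case: (u =P L) => H2.
  by case: (ltnP p q) => Hpq; case: (posnP L) => HL; lia.
move=> Hp.
have := neq_bump (u - L) (sigv sg (u - L).-1 p); move/eqP; lia.
Qed.

Lemma nb_inj L q sg u p1 p2 : 0 < q -> u < (L+q).+1 -> p1 < gdeg L q u ->
  p2 < gdeg L q u -> nb L q sg u p1 = nb L q sg u p2 -> p1 = p2.
Proof.
move=> q0 Hu; rewrite /gdeg /nb.
case: (ltnP u L) => H1.
  by case: (u =P 0) => Hu0; case: (p1 =P 0) => Hp0; case: (p2 =P 0) => Hq0; lia.
case: (u =P L) => H2.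
  by case: (ltnP p1 q) => Hpq; case: (ltnP p2 q) => Hpq'; case: (posnP L) => HL; lia.
move=> Hp1 Hp2 /addnI /(can_inj (bumpK _)) E.
by apply: (sigv_inj (r := (u - L).-1) _ Hp1 Hp2 E); lia.
Qed.


Lemma reach_refl n (G : pgraph n) k u : reach G k u u.
Proof. by elim: k => [|k IH] //=; left. Qed.

Lemma reach_trans n (G : pgraph n) k1 k2 u w v :
  reach G k1 u w -> reach G k2 w v -> reach G (k1 + k2) u v.
Proof.
move=> H1; elim: k2 v => [|k2 IH] v /=; first by move=> <-; rewrite addn0.
rewrite addnS /=; case=> [H|[w' [H Ha]]]; first by left; apply: IH.
by right; exists w'; split => //; apply: IH.
Qed.

Lemma reach_mono n (G : pgraph n) k k' u v : k <= k' -> reach G k u v -> reach G k' u v.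
Proof.
move=> /subnK <- H; rewrite addnC; apply: reach_trans H _; exact: reach_refl.
Qed.

Lemma reach_adj n (G : pgraph n) u v : adj G u v -> reach G 1 u v.
Proof. by move=> H; right; exists u. Qed.

Definition node L q (i : nat) : 'I_(L+q).+1 := inord i.

Lemma nodeK L q i : i < (L+q).+1 -> val (node L q i) = i.
Proof. exact: inordK. Qed.

Lemma adj_node L q sg i j : 0 < q -> i < (L+q).+1 -> j < (L+q).+1 ->
  (exists2 p, p < gdeg L q i & nb L q sg i p = j) ->
  adj (G L q sg) (node L q i) (node L q j).
Proof.
move=> q0 Hi Hj H; apply/adjE => //; rewrite !nodeK //.
Qed.

Lemma path_adj L q sg i : 0 < q -> i < L ->
  adj (G L q sg) (node L q i) (node L q i.+1) /\
  adj (G L q sg) (node L q i.+1) (node L q i).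
Proof.
move=> q0 Hi; split; apply: adj_node => //; try lia.
  by exists 0; rewrite ?gdeg_path ?nb_path //; case: eqP.
case: (ltngtP i.+1 L) => H2; last 1 first.
- rewrite H2; exists q; rewrite ?gdeg_a ?nb_a ?ltnn; first by case: posnP; lia.
  lia.
- by exists 1; rewrite ?gdeg_path ?nb_path.
- lia.
Qed.

Lemma path_reach L q sg d i : 0 < q -> i + d <= L ->
  reach (G L q sg) d (node L q i) (node L q (i + d)) /\
  reach (G L q sg) d (node L q (i + d)) (node L q i).
Proof.
move=> q0; elim: d i => [|d IH] i H; first by rewrite addn0; split; exact: reach_refl.
have [A1 A2] := IH i ltac:(lia).
have [B1 B2] := @path_adj L q sg (i + d) q0 ltac:(lia).
rewrite addnS; split.
  by have := reach_trans A1 (reach_adj B1); rewrite addn1.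
have [C1 C2] := IH i.+1 ltac:(lia).
have [D1 D2] := @path_adj L q sg i q0 ltac:(lia).
have := reach_trans C2 (reach_adj D2).
by rewrite addn1 addSn.
Qed.


Lemma node_val L q (u : 'I_(L+q).+1) : node L q u = u.
Proof. exact: inord_val. Qed.

Lemma path_reach2 L q sg i j : 0 < q -> i <= L -> j <= L ->
  reach (G L q sg) L (node L q i) (node L q j).
Proof.
move=> q0 Hi Hj; case: (leqP i j) => H.
  have [A _] := @path_reach L q sg (j - i) i q0 ltac:(lia).
  rewrite subnKC // in A; apply: (reach_mono _ A); lia.
have [_ A] := @path_reach L q sg (i - j) j q0 ltac:(lia).
rewrite subnKC in A; last lia. apply: (reach_mono _ A); lia.
Qed.

Lemma reach_a L q sg i : 0 < q -> i <= L ->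
  reach (G L q sg) (L - i) (node L q i) (node L q L) /\
  reach (G L q sg) (L - i) (node L q L) (node L q i).
Proof.
move=> q0 Hi; have [A B] := @path_reach L q sg (L - i) i q0 ltac:(lia).
by rewrite subnKC in A B.
Qed.

Lemma clique_adj' L q sg u w : 0 < q -> L <= u -> L <= w -> u <> w ->
  u < (L+q).+1 -> w < (L+q).+1 -> adj (G L q sg) (node L q u) (node L q w).
Proof.
move=> q0 Lu Lw uw Hu Hw; apply: adj_node => //; exact: clique_adj.
Qed.

Lemma diam_up L q sg (u v : 'I_(L+q).+1) : 0 < q -> reach (G L q sg) L.+1 u v.
Proof.
move=> q0; rewrite -(node_val u) -(node_val v).
have Hu := ltn_ord u; have Hv := ltn_ord v.
case: (leqP u L) => H1; case: (leqP v L) => H2.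
- by apply: (reach_mono _ (path_reach2 _ q0 H1 H2)).
- have [A _] := @reach_a L q sg u q0 H1.
  have B := clique_adj' sg q0 (leqnn L) (ltnW H2) ltac:(lia) ltac:(lia) Hv.
  by apply: (reach_mono _ (reach_trans A (reach_adj B))); lia.
- have [_ A] := @reach_a L q sg v q0 H2.
  have B := clique_adj' sg q0 (ltnW H1) (leqnn L) ltac:(lia) Hu ltac:(lia).
  by apply: (reach_mono _ (reach_trans (reach_adj B) A)); lia.
- case: (eqVneq (val u) (val v)) => E.
    by rewrite E; exact: reach_refl.
  have B := clique_adj' sg q0 (ltnW H1) (ltnW H2) (elimN eqP E) Hu Hv.
  by apply: (reach_mono _ (reach_adj B)).
Qed.

Definition dd L (x : nat) := if x <= L then x else L.+1.

Lemma dd_adj L q sg (w v : 'I_(L+q).+1) : 0 < q ->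
  adj (G L q sg) w v -> dd L v <= (dd L w).+1.
Proof.
move=> q0 /adjE [] // p Hp E.
have Hv := ltn_ord v; rewrite /dd.
case: (ltngtP w L) => H1.
- rewrite nb_path // in E; move: Hp; rewrite gdeg_path // => Hp.
  move: E; case: (p =P 0) => _ E; case: (leqP v L); case: (leqP w L); lia.
- case: (leqP v L); case: (leqP w L); lia.
- rewrite H1 nb_a in E; case: (leqP v L); case: (leqP w L); try lia.
Qed.

Lemma dd_reach L q sg k (u v : 'I_(L+q).+1) : 0 < q ->
  reach (G L q sg) k u v -> dd L v <= dd L u + k.
Proof.
move=> q0; elim: k v => [|k IH] v /=; first by move=> ->; rewrite addn0.
case=> [H|[w [H Ha]]]; first by have := IH _ H; lia.
have := IH _ H; have := dd_adj q0 Ha; lia.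
Qed.

Lemma diam_low L q sg : 0 < q -> ~ reach (G L q sg) L (node L q 0) (node L q L.+1).
Proof.
move=> q0 H; have := dd_reach q0 H; rewrite /dd !nodeK; try lia.
by rewrite leq0n ltnn; lia.
Qed.

Lemma G_diam L q sg : 0 < q -> has_diameter (G L q sg) L.+1.
Proof.
move=> q0; split; first by move=> u v; exact: diam_up.
by exists (node L q 0), (node L q L.+1); exact: diam_low.
Qed.

Lemma G_wf L q sg : 0 < q -> wf_pgraph (G L q sg).
Proof.
move=> q0; split.
- move=> v p Hp E; apply: (@nb_noloop L q sg v p q0 (ltn_ord v) Hp).
  by rewrite -(@GnbrE L q sg v p q0 Hp) E.
- move=> v p p' Hp Hp' E; apply: (@nb_inj L q sg v p p' q0 (ltn_ord v) Hp Hp').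
  by rewrite -(@GnbrE L q sg v p q0 Hp) -(@GnbrE L q sg v p' q0 Hp') E.
- move=> v p Hp.
  have [p' Hp' E] := @nb_sym L q sg v p q0 (ltn_ord v) Hp.
  have Ew := @GnbrE L q sg v p q0 Hp.
  by exists p'; rewrite /= Ew // E inord_val.
- by move=> u v; exists L.+1; apply: diam_up.
Qed.


Lemma run_eq S M (A : algo S M) n (G1 G2 : pgraph n) adv1 adv2 T :
 (forall u : 'I_n, u <= T -> deg G1 u = deg G2 u /\ adv1 u = adv2 u) ->
 (forall u : 'I_n, u < T -> forall p, p < deg G1 u ->
    [/\ nbr G1 u p = nbr G2 u p, rport G1 u p = rport G2 u p &
        nbr G1 u p <= u.+1]) ->
 forall t (u : 'I_n), u + t <= T -> run A G1 adv1 t u = run A G2 adv2 t u.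
Proof.
move=> Hd Hn; elim=> [|t IH] u Hu /=.
  by have [-> ->] := Hd u ltac:(lia).
have [Ed _] := Hd u ltac:(lia).
rewrite IH; last lia.
congr a_trans; rewrite -Ed; apply/eq_in_map => p; rewrite mem_iota /= => Hp.
have [E1 E2 E3] := Hn u ltac:(lia) p Hp.
by rewrite E1 E2 IH // -E1; lia.
Qed.

Lemma nb_indep L q sg1 sg2 u p : u <= L -> nb L q sg1 u p = nb L q sg2 u p.
Proof.
move=> H; rewrite /nb; case: (ltnP u L) => // H1.
by have -> : u == L by apply/eqP; lia.
Qed.

Lemma run_G S M (A : algo S M) L q sg1 sg2 adv1 adv2 T : 0 < q -> T <= L ->
  (forall u : 'I_(L+q).+1, u <= T -> adv1 u = adv2 u) ->
  forall t, t <= T ->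
  run A (G L q sg1) adv1 t (node L q 0) = run A (G L q sg2) adv2 t (node L q 0).
Proof.
move=> q0 TL Ha t Ht; apply: (@run_eq _ _ _ _ _ _ _ _ T) => //.
- by move=> u Hu; split => //; apply: Ha.
- move=> u Hu p Hp.
  have Hw : nbr (G L q sg1) u p = nbr (G L q sg2) u p.
    by rewrite /= (@nb_indep L q sg1 sg2) //; lia.
  split => //.
    rewrite /rport -Hw; apply: eq_find => q' /=.
    rewrite (@nb_indep L q sg1 sg2) //.
    rewrite (@GnbrE L q sg1 u p q0 Hp) nb_path; last lia.
    case: (p =P 0) => _; lia.
  rewrite (@GnbrE L q sg1 u p q0 Hp) nb_path; last lia.
  case: (p =P 0) => _; lia.
- rewrite /node inordK //; lia.
Qed.


Definition isof n m (G : pgraph n) (H : pgraph m) (f : 'I_n -> 'I_m) :=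
  forall v, deg H (f v) = deg G v /\
      forall p, p < deg G v -> nbr H (f v) p = f (nbr G v p).

Lemma nbr_a L q sg p : 0 < q -> p < q ->
  nbr (G L q sg) (node L q L) p = node L q (L + p.+1).
Proof.
move=> q0 Hp; apply: val_inj => /=.
have Hd : p < gdeg L q (node L q L).
  by rewrite nodeK ?gdeg_a; [case: posnP; lia | lia].
rewrite (GnbrE sg q0 Hd) !nodeK ?nb_a ?Hp //; lia.
Qed.

Lemma iso_core L q sg1 sg2 m (H : pgraph m) (f1 f2 : 'I_(L+q).+1 -> 'I_m) :
  0 < q -> isof (G L q sg1) H f1 -> isof (G L q sg2) H f2 -> injective f2 ->
  f1 (node L q L) = f2 (node L q L) -> sg1 = sg2.
Proof.
move=> q0 I1 I2 inj2 Ea.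
have Hda : forall p, p < q -> p < deg (G L q sg1) (node L q L).
  by move=> p Hp; rewrite /= nodeK ?gdeg_a; [case: posnP; lia | lia].
have Ec : forall c : 'I_(L+q).+1, L <= c -> f1 c = f2 c.
  move=> c Hc; case: (ltngtP L c) => H1; last by rewrite -(node_val c) -H1.
  - have Hp : (c - L).-1 < q by have := ltn_ord c; lia.
    have Ec : c = node L q (L + (c - L).-1.+1).
      by apply: val_inj => /=; rewrite nodeK; lia.
    rewrite Ec -{1}(@nbr_a L q sg1 _ q0 Hp) -(@nbr_a L q sg2 _ q0 Hp).
    have [_ A1] := I1 (node L q L); have [_ A2] := I2 (node L q L).
    by rewrite -A1 ?Hda // -A2 ?Ea // Hda.
  - lia.
have Ef : forall (u : 'I_(L+q).+1) p, L < u -> p < q ->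
    nbr (G L q sg1) u p = nbr (G L q sg2) u p.
  move=> u p Hu Hp.
  have Hd : p < gdeg L q u by rewrite gdeg_free.
  have Lc : forall sg, L <= nbr (G L q sg) u p.
    by move=> sg; rewrite (GnbrE sg q0 Hd) nb_free //; lia.
  apply: inj2; rewrite -Ec ?Lc //.
  have [_ A1] := I1 u; have [_ A2] := I2 u.
  by rewrite -A1 // -A2 // Ec //; lia.
apply/ffunP => r; apply/permP => x; apply: val_inj => /=.
have Hu : L < node L q (L + r.+1) by rewrite nodeK; [lia | have := ltn_ord r; lia].
have := Ef _ _ Hu (ltn_ord x).
move/(congr1 (@nat_of_ord _)).
have Hd : x < gdeg L q (node L q (L + r.+1)) by rewrite gdeg_free.
rewrite (GnbrE sg1 q0 Hd) (GnbrE sg2 q0 Hd) !nb_free // nodeK; last first.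
  by have := ltn_ord r; lia.
move/addnI/(can_inj (bumpK _)).
have -> : (L + r.+1 - L).-1 = r by lia.
by rewrite !sigvE.
Qed.


Definition enc b (s : seq bool) : 'I_b.+1 * b.-tuple bool :=
  (inord (size s), [tuple nth false s i | i < b]).

Lemma enc_inj b s1 s2 : size s1 <= b -> size s2 <= b -> enc b s1 = enc b s2 -> s1 = s2.
Proof.
move=> H1 H2 E; have Et := congr1 snd E; have := congr1 (fun x => nat_of_ord x.1) E.
rewrite /= !inordK // => Es.
apply: (@eq_from_nth _ false) => // i Hi.
have Hib : i < b by lia.
have := congr1 (fun t => tnth t (Ordinal Hib)) Et.
by rewrite !tnth_mktuple.
Qed.

Lemma combin L q T S M (A : algo S M)
  (oracle : forall G : pgraph (L+q).+1, 'I_(L+q).+1 -> seq bool) :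
  0 < q -> T <= L ->
  (forall sg, recognizes A (G L q sg) (oracle (G L q sg)) T) ->
  exists sg, let b := advice_size (oracle (G L q sg)) in
    q`! ^ q <= (b.+1 * 2 ^ b) ^ T.+1 * (L+q).+1.
Proof.
move=> q0 TL Hrec.
pose P := {ffun 'I_q -> {perm 'I_q}}.
pose adv (sg : P) := oracle (G L q sg).
have cardP : #|{: P}| = q`! ^ q by rewrite card_ffun card_Sn card_ord.
have [sg0 Eb] := @eq_bigmax P (fun sg => advice_size (adv sg))
  ltac:(by rewrite cardP expn_gt0 fact_gt0).
set b := \max_(sg : P) _ in Eb.
have Hsz : forall sg u, size (adv sg u) <= b.
  move=> sg u; apply: (@leq_trans (advice_size (adv sg))).
    rewrite /advice_size; exact: (@leq_bigmax _ (fun v => size (adv sg v)) u).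
  rewrite /b; exact: (@leq_bigmax _ (fun sg => advice_size (adv sg)) sg).
exists sg0; rewrite /= -/(adv sg0) -Eb.
set N := (L+q).+1.
pose a := node L q L.
pose v0 := node L q 0.
pose Q (sg : P) (x : 'I_N) := exists t (H : {m : nat & pgraph m}) (f : 'I_N -> 'I_(projT1 H)),
  [/\ t <= T, (forall t', t' < t -> a_out A (run A (G L q sg) (adv sg) t' v0) = None),
      a_out A (run A (G L q sg) (adv sg) t v0) = Some H,
      isof (G L q sg) (projT2 H) f /\ bijective f & nat_of_ord (f a) = x].
have HQ : forall sg, exists x, Q sg x.
  move=> sg; have [t [Ht [Hn [H [Ho [f [Hb Hi]]]]]]] := Hrec sg v0.
  have EN : N = projT1 H by have := bij_eq_card Hb; rewrite !card_ord.
  have Hx : f a < N by rewrite EN.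
  exists (Ordinal Hx), t, H, f; split => //.
pose xs (sg : P) := proj1_sig (constructive_indefinite_description _ (HQ sg)).
have xsP : forall sg, Q sg (xs sg) by move=> sg; exact: proj2_sig (constructive_indefinite_description _ (HQ sg)).
pose K := ({ffun 'I_T.+1 -> 'I_b.+1 * b.-tuple bool} * 'I_N)%type.
pose Phi (sg : P) : K := ([ffun i : 'I_T.+1 => enc b (adv sg (inord i))], xs sg).
have Phi_inj : injective Phi.
  move=> sg1 sg2 [] /ffunP Ek Ex.
  have Ea : forall u : 'I_N, u <= T -> adv sg1 u = adv sg2 u.
    move=> u Hu; have := Ek (inord u); rewrite !ffunE inordK // inord_val.
    by apply: enc_inj.
  have Er := @run_G S M A L q sg1 sg2 (adv sg1) (adv sg2) T q0 TL Ea.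
  have [t1 [H1 [f1 [Ht1 Hn1 Ho1 [I1 B1] X1]]]] := xsP sg1.
  have [t2 [H2 [f2 [Ht2 Hn2 Ho2 [I2 B2] X2]]]] := xsP sg2.
  have Et : t1 = t2.
    case: (ltngtP t1 t2) => // Hlt.
      by move: (Hn2 _ Hlt); rewrite -Er ?Ho1 //; lia.
    by move: (Hn1 _ Hlt); rewrite Er ?Ho2 //; lia.
  subst t2; move: Ho2; rewrite -Er // Ho1 => -[EH]; subst H2.
  apply: (iso_core q0 I1 I2 (bij_inj B2)); apply: val_inj => /=.
  by rewrite -/a X1 X2 Ex.
have := leq_card Phi Phi_inj.
by rewrite cardP card_prod card_ffun card_prod card_tuple card_bool !card_ord.
Qed.


Lemma fact_ge h j : h ^ j <= (h + j)`!.
Proof.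
elim: j => [|j IH]; first by rewrite expn0 addn0 fact_gt0.
by rewrite expnS addnS factS; apply: leq_mul => //; lia.
Qed.

Lemma fact_half q : q./2 ^ q./2 <= q`!.
Proof.
set h := q./2.
have Hq : q = h + (q - h) by rewrite /h; lia.
case: (posnP h) => H0; first by rewrite H0 expn0 fact_gt0.
apply: leq_trans (_ : h ^ (q - h) <= _); last by rewrite {2}Hq fact_ge.
apply: leq_pexp2l => //; rewrite /h; lia.
Qed.

Lemma final_nat N0 n q T b : 0 < N0 -> 36 * N0 * N0 + 4 <= n -> n <= N0 * q ->
  q <= n -> q`! ^ q <= (b.+1 * 2 ^ b) ^ T.+1 * n ->
  n * n * trunc_log 2 n <= 36 * N0 * N0 * (b * T.+1).
Proof.
move=> N0p Hn Hnq Hqn Hc.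
set l := trunc_log 2 n.
have Hl1 : 2 ^ l <= n by apply: trunc_logP; lia.
have Hl2 : n < 2 ^ l.+1 by apply: trunc_log_ltn.
have Hl3 : 2 <= l.
  case: (leqP 2 l) => // H; have H4 : 2 ^ l.+1 <= 2 ^ 2 by rewrite leq_exp2l.
  move: H4; rewrite (_ : 2 ^ 2 = 4) //; lia.
set l2 := l./2.
have l2p : 1 <= l2 by rewrite /l2; lia.
have Hll : l <= 2 * l2 + 1 by rewrite /l2; lia.
set h := q./2.
have Hqh : q <= 2 * h + 1 by rewrite /h; lia.
have q36 : 36 * N0 <= q.
  have : N0 * (36 * N0) <= N0 * q by apply: leq_trans Hnq; lia.
  by rewrite leq_pmul2l.
have h1 : 1 <= h by rewrite /h; lia.
set s := 2 ^ l2.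
have Hss : s * s <= n.
  apply: leq_trans Hl1; rewrite /s -expnD leq_exp2l //; lia.
have Hsh : s <= h.
  case: (leqP (3 * N0) s) => Hs.
    have : N0 * (2 * s + 1) <= N0 * q.
      apply: leq_trans Hnq; apply: leq_trans Hss.
      have : N0 * (2 * s + 1) <= N0 * (3 * s) by rewrite leq_pmul2l //; lia.
      move=> H; apply: leq_trans H _.
      have : N0 * 3 <= s by lia.
      by move=> H'; rewrite mulnA; apply: leq_mul.
    rewrite leq_pmul2l //; lia.
  have : 36 * N0 <= 2 * h + 1 by lia.
  lia.
have E1 : h ^ (h * q) <= q`! ^ q.
  by rewrite expnM leq_exp2r; [exact: fact_half | lia].
have E2 : b.+1 * 2 ^ b <= 2 ^ (b + b).
  by rewrite expnD leq_mul2r ltn_expl // orbT.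
have E3 : (b.+1 * 2 ^ b) ^ T.+1 <= 2 ^ ((b + b) * T.+1).
  by rewrite expnM leq_exp2r.
have E4 : s ^ (h * q) <= h ^ (h * q).
  by rewrite leq_exp2r // muln_gt0; apply/andP; split; lia.
have E5 : 2 ^ (l2 * (h * q)) <= 2 ^ ((b + b) * T.+1 + l.+1).
  rewrite expnM -/s expnD.
  apply: leq_trans E4 _; apply: leq_trans E1 _; apply: leq_trans Hc _.
  exact: leq_mul E3 (ltnW Hl2).
move: E5; rewrite leq_exp2l // => E5.
have F1 : n * n <= 3 * N0 * N0 * (h * q).
  have : n * n <= (N0 * q) * (N0 * q) by apply: leq_mul.
  move=> H; apply: leq_trans H _.
  have : (N0 * q) * (N0 * q) = N0 * N0 * (q * q) by lia.
  move=> ->; have : 3 * N0 * N0 * (h * q) = N0 * N0 * ((3 * h) * q) by lia.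
  move=> ->; apply: leq_mul => //; apply: leq_mul => //; lia.
have F2 : n * n * l <= 9 * N0 * N0 * (l2 * (h * q)).
  have : n * n * l <= (3 * N0 * N0 * (h * q)) * (3 * l2) by apply: leq_mul => //; lia.
  move=> H; apply: leq_trans H _.
  have -> : 3 * N0 * N0 * (h * q) * (3 * l2) = 9 * N0 * N0 * (l2 * (h * q)) by lia.
  done.
have F3 : 9 * N0 * N0 * (l2 * (h * q)) <= 9 * N0 * N0 * ((b + b) * T.+1 + l.+1).
  by apply: leq_mul.
have F4 : 18 * N0 * N0 * l.+1 <= n * n * l.
  have n6 : 6 * N0 <= n by have := leq_pmulr N0 N0p; lia.
  have : 18 * N0 * N0 * l.+1 <= (6 * N0) * (6 * N0) * l.
    have -> : 6 * N0 * (6 * N0) * l = 18 * N0 * N0 * (2 * l) by lia.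
    apply: leq_mul => //; lia.
  move=> H; apply: leq_trans H _; apply: leq_mul => //; apply: leq_mul; lia.
set Y := b * T.+1.
have : (b + b) * T.+1 = 2 * Y by rewrite /Y; lia.
move=> EY; rewrite EY in F3.
set Z := N0 * N0.
have : 9 * N0 * N0 = 9 * Z by rewrite /Z; lia. move=> E9.
have : 36 * N0 * N0 = 36 * Z by rewrite /Z; lia. move=> E36.
have : 18 * N0 * N0 = 18 * Z by rewrite /Z; lia. move=> E18.
rewrite E9 in F2 F3; rewrite E18 in F4; rewrite E36.
set W := n * n * l in F2 F4 *.
have : W <= 9 * Z * (2 * Y + l.+1) by lia.
have : 9 * Z * (2 * Y + l.+1) = 18 * (Z * Y) + 9 * (Z * l.+1) by lia.
have : 18 * Z * l.+1 = 18 * (Z * l.+1) by lia.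
have : 36 * Z * Y = 36 * (Z * Y) by lia.
lia.
Qed.


Delimit Scope R_scope with Re.

Lemma INR_muln a b : INR (a * b) = (INR a * INR b)%Re.
Proof. by rewrite -multE mult_INR. Qed.

Lemma INR_expn m j : INR (m ^ j) = (INR m ^ j)%Re.
Proof. elim: j => [|j IH] //=; by rewrite expnS INR_muln IH. Qed.

Lemma INR_leq a b : a <= b -> (INR a <= INR b)%Re.
Proof. by move/leP; apply: le_INR. Qed.

Lemma INR_ltn a b : a < b -> (INR a < INR b)%Re.
Proof. by move/ltP; apply: lt_INR. Qed.

Theorem theorem6p2 (alpha : R) (Ha : Rlt 0 alpha /\ Rlt alpha 1) :
  exists (c : R) (n0 : nat), Rlt 0 c /\
  forall (n D k : nat), n0 <= n -> 1 <= D -> Rle (INR D) (Rmult alpha (INR n)) ->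
    0 < k -> k <= D ->
  forall (S M : Type) (A : algo S M)
         (oracle : forall G : pgraph n, 'I_n -> seq bool),
    (forall G : pgraph n, wf_pgraph G -> has_diameter G D ->
       recognizes A G (oracle G) (D - k)) ->
    exists G : pgraph n, wf_pgraph G /\ has_diameter G D /\
      Rle (Rdiv (Rmult c (Rmult (pow (INR n) 2) (log2R (INR n)))) (INR (D - k + 1)))
          (INR (advice_size (oracle G))).
Proof.
case: Ha => Ha0 Ha1.
have [N0 HN0] := INR_archimed (1 - alpha) 1 ltac:(lra).
have N0p : 0 < N0.
  by case: N0 HN0 => //=; lra.
set K := 36 * N0 * N0.
have Kp : (0 < INR K)%Re by apply: lt_0_INR; apply/ltP; rewrite /K; lia.
exists (/ (2 * INR K))%Re, (36 * N0 * N0 + 4); split.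
  by apply: Rinv_0_lt_compat; lra.
move=> n D k Hn HD HDa Hk HkD S M A oracle Hrec.
have HND : N0 * D + n <= N0 * n.
  apply/leP/INR_le; rewrite -plusE plus_INR !INR_muln.
  have HN0r : (0 <= INR N0)%Re by apply: pos_INR.
  have Hnr : (0 <= INR n)%Re by apply: pos_INR.
  have h1 := Rmult_le_compat_l _ _ _ HN0r HDa.
  have h2 : (0 <= (INR N0 * (1 - alpha) - 1) * INR n)%Re.
    by apply: Rmult_le_pos => //; lra.
  lra.
case: D HD HDa HkD Hrec HND => [//|L] _ HDa HkD Hrec HND.
have HLn : L.+1 < n.
  case: (ltnP L.+1 n) => // H.
  have : N0 * n <= N0 * L.+1 by rewrite leq_mul2l H orbT.
  lia.
have [q Eq] : exists q, n = (L + q).+1 by exists (n - L.+1); lia.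
subst n.
have Hnq : (L + q).+1 <= N0 * q.
  move: HND; rewrite -addn1 -addnS mulnDr; lia.
have q0 : 0 < q by case: (posnP q) => // H0; move: Hnq; rewrite H0 muln0.
set T := L.+1 - k.
have TL : T <= L by rewrite /T; lia.
have [sg Hc] := @combin L q T S M A oracle q0 TL
  (fun sg => Hrec _ (@G_wf L q sg q0) (@G_diam L q sg q0)).
exists (G L q sg); split; first exact: (@G_wf L q sg q0).
split; first exact: (@G_diam L q sg q0).
move: Hc => /=; set b := advice_size _ => Hc.
have NN := final_nat N0p Hn Hnq ltac:(lia) Hc.
set n := (L + q).+1 in NN Hn *.
set l := trunc_log 2 n in NN.
have Hl2 : n < 2 ^ l.+1 by apply: trunc_log_ltn.
have Hl1 : 2 ^ l <= n by apply: trunc_logP; lia.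
have l1 : 1 <= l.
  case: (leqP 1 l) => // H; have H4 : 2 ^ l.+1 <= 2 ^ 1 by rewrite leq_exp2l.
  lia.
rewrite (_ : L.+1 - k + 1 = T.+1); last by rewrite /T; lia.
have NNr : (INR n * INR n * INR l <= INR K * (INR b * INR T.+1))%Re.
  by move: (INR_leq NN); rewrite !INR_muln.
have Hnr : (1 <= INR n)%Re by apply: (@INR_leq 1 _); lia.
have ln2 : (/ 2 < ln 2)%Re := ln_lt_2.
have Hlg : (log2R (INR n) <= 2 * INR l)%Re.
  rewrite /log2R.
  have H1 : (INR n < 2 ^ l.+1)%Re.
    by have := INR_ltn Hl2; rewrite INR_expn.
  have H2 : (ln (INR n) < INR l.+1 * ln 2)%Re.
    rewrite -ln_pow; last lra.
    by apply: ln_increasing; lra.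
  have H3 : (INR l.+1 <= 2 * INR l)%Re.
    rewrite S_INR; have : (1 <= INR l)%Re by apply: (@INR_leq 1 _).
    lra.
  rewrite (_ : INR 2 = 2%Re) //.
  apply: Rlt_le; apply: (Rmult_lt_reg_r (ln 2)); first lra.
  rewrite /Rdiv Rmult_assoc Rinv_l; last lra.
  nra.
have Hlg0 : (0 <= log2R (INR n))%Re.
  rewrite /log2R (_ : INR 2 = 2%Re) //.
  apply: Rmult_le_pos; last by apply: Rlt_le; apply: Rinv_0_lt_compat; lra.
  rewrite -ln_1; case: (Rle_lt_or_eq_dec _ _ Hnr) => H; [apply: Rlt_le; apply: ln_increasing; lra | rewrite H; lra].
have HU : (0 < INR T.+1)%Re by apply: lt_0_INR; apply/ltP.
have Hb : (0 <= INR b)%Re by apply: pos_INR.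
have Hl0 : (0 <= INR l)%Re by apply: pos_INR.
set X := INR n in NNr Hnr Hlg Hlg0 *.
set Lg := log2R X in Hlg Hlg0 *.
set U := INR T.+1 in NNr HU *.
set B := INR b in NNr Hb *.
set Kr := INR K in Kp NNr *.
have Y : (X ^ 2 * Lg <= 2 * Kr * U * B)%Re.
  have : (X ^ 2 * Lg <= X ^ 2 * (2 * INR l))%Re.
    apply: Rmult_le_compat_l => //; nra.
  nra.
rewrite /Rdiv (_ : (/ (2 * Kr) * (X ^ 2 * Lg) * / U = (X ^ 2 * Lg) * / (2 * Kr * U))%Re);
  last by field; lra.
apply: (Rmult_le_reg_r (2 * Kr * U)); first nra.
rewrite Rmult_assoc Rinv_l; last nra.
lra.
Qed.
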